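(* Let $\tau,\nu$ be complex $n\times n$ matrices and $0\le\eta\le n$. Then, with all indices summed over $\{0,\dots,n-1\}$: 1. $\big\|\sum_{j,k,m}\tau_{j,k}\nu_{k,m}A_j^\dagger N_mA_k\big\|_\eta\le\|\tau\|\|\nu\|_{\max}\eta^2$; 2. $\big\|\sum_{j,k}\tau_{j,k}\nu_{k,k}A_j^\dagger A_k\big\|_\eta\le\|\tau\|\|\nu\|_{\max}\eta$; 3. $\big\|\sum_{j,k,l}\tau_{j,k}\nu_{l,k}A_j^\dagger N_lA_k\big\|_\eta\le\|\tau\|\|\nu\|_{\max}\eta^2$; 4. $\big\|\sum_{j,k,m}\tau_{j,k}\nu_{j,m}A_j^\dagger N_mA_k\big\|_\eta\le\|\tau\|\|\nu\|_{\max}\eta^2$; 5. $\big\|\sum_{j,k}\tau_{j,k}\nu_{j,j}A_j^\dagger A_k\big\|_\eta\le\|\tau\|\|\nu\|_{\max}\eta$; 6. $\big\|\sum_{j,k,l}\tau_{j,k}\nu_{l,j}A_j^\dagger N_l A_k\big\|_\eta\le\|\tau\|\|\nu\|_{\max}\eta^2$.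
   Context: Fermionic Fock space on $n$ spin orbitals: the $2^n$-dimensional Hilbert space with orthonormal basis $|c_0,\dots,c_{n-1}\rangle$, $c_j\in\{0,1\}$, with creation operators $A_j^\dagger|\dots,0_j,\dots\rangle=(-1)^{\sum_{k<j}c_k}|\dots,1_j,\dots\rangle$, $A_j^\dagger|\dots,1_j,\dots\rangle=0$, annihilation operators $A_j=(A_j^\dagger)^\dagger$, $N_j=A_j^\dagger A_j$, $N=\sum_jN_j$. The $\eta$-electron subspace is spanned by basis vectors with $\sum_jc_j=\eta$; $\eta$-electron states are unit vectors in it. For an operator $X$ commuting with $N$, $\|X\|_\eta=\max|\langle\phi_\eta|X|\psi_\eta\rangle|$ over $\eta$-electron states. $\|\tau\|$ is the spectral norm and $\|\nu\|_{\max}=\max_{l,m}|\nu_{l,m}|$. *)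

(* Defs.v *)
From HB Require Import structures.
From mathcomp Require Import all_boot all_order all_algebra.
From mathcomp Require Import complex.
From mathcomp Require Import boolp classical_sets reals.
Set Implicit Arguments. Unset Strict Implicit. Unset Printing Implicit Defensive.
Import Order.TTheory GRing.Theory Num.Theory.
Local Open Scope ring_scope.
Local Open Scope classical_set_scope.

Section Fock.
Variable R : realType.
Local Notation C := R[i].
Local Open Scope complex_scope.

Definition cabs (z : C) : R := Normc.normc z.

Definition vnorm2 n (v : 'cV[C]_n) : R := Num.sqrt (\sum_i cabs (v i 0) ^+ 2).
Definition spec_norm n (tau : 'M[C]_n) : R :=
  sup [set r : R | exists v : 'cV[C]_n, vnorm2 v = 1 /\ r = vnorm2 (tau *m v)].

Definition max_norm n (nu : 'M[C]_n) : R :=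
  \big[Num.max/0]_(l < n) \big[Num.max/0]_(m < n) cabs (nu l m).

(** Fock space on n spin orbitals: basis vectors |c_0..c_{n-1}> indexed by
    occupation configurations c : 'I_n -> bool; a vector is a function
    from configurations to C; an operator is given by its matrix
    elements  X c d = <c| X |d>. *)
Definition config n := {ffun 'I_n -> bool}.
Definition fvec n := config n -> C.
Definition fop n := config n -> config n -> C.

Definition apply_op n (X : fop n) (psi : fvec n) : fvec n :=
  fun c => \sum_(d : config n) X c d * psi d.
Definition comp_op n (X Y : fop n) : fop n :=
  fun c e => \sum_(d : config n) X c d * Y d e.
Definition adj_op n (X : fop n) : fop n := fun c d => (X d c)^*.
Definition inner n (phi psi : fvec n) : C := \sum_(c : config n) (phi c)^* * psi c.

Definition nbefore n (c : config n) (j : 'I_n) : nat :=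
  #|[set k : 'I_n | (k < j)%N && c k]|.

(** creation operator A_j^dagger : |.., 0_j, ..> |-> (-1)^{sum_{k<j} c_k} |.., 1_j, ..>,
    and |.., 1_j, ..> |-> 0. Matrix element <c| A_j^dag |d>. *)
Definition Adag n (j : 'I_n) : fop n := fun c d =>
  if [&& c j, ~~ d j & [forall k, (k != j) ==> (c k == d k)]]
  then (-1) ^+ nbefore d j else 0.
Definition Aop n (j : 'I_n) : fop n := adj_op (Adag j).
Definition Nop n (j : 'I_n) : fop n := comp_op (Adag j) (Aop j).

Definition sum_op n (I : finType) (F : I -> fop n) : fop n :=
  fun c d => \sum_(i : I) F i c d.
Definition scale_op n (a : C) (X : fop n) : fop n := fun c d => a * X c d.

Definition nelec n (c : config n) : nat := #|[set j | c j]|.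
Definition eta_state n (eta : nat) (psi : fvec n) : Prop :=
  (forall c, nelec c != eta -> psi c = 0) /\ inner psi psi = 1.

Definition eta_norm n (X : fop n) (eta : nat) : R :=
  sup [set r : R | exists phi psi : fvec n,
         [/\ eta_state eta phi, eta_state eta psi &
             r = cabs (inner phi (apply_op X psi))]].

End Fock.

Arguments Adag {R n} j.
Arguments Aop {R n} j.
Arguments Nop {R n} j.

(* Main.v *)
Require Import Defs.
From HB Require Import structures.
From mathcomp Require Import all_boot all_order all_algebra.
From mathcomp Require Import complex.
From mathcomp Require Import boolp classical_sets reals.
From mathcomp Require Import ring lra.
Set Implicit Arguments. Unset Strict Implicit. Unset Printing Implicit Defensive.
Import Order.TTheory GRing.Theory Num.Theory.
Local Open Scope ring_scope.
Section S.
Variable R : realType.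
Local Notation C := R[i].
Local Open Scope complex_scope.
Lemma cabsE (z : C) : `|z| = (cabs z)%:C. Proof. by []. Qed.
Lemma cabs_ge0 (z : C) : 0 <= cabs z. Proof. by case: z => a b; rewrite /cabs /= sqrtr_ge0. Qed.
Lemma cabsM (x y : C) : cabs (x * y) = cabs x * cabs y. Proof. exact: Normc.normcM. Qed.
Lemma cabsD (x y : C) : cabs (x + y) <= cabs x + cabs y. Proof. exact: le_normcD. Qed.
Lemma cabsJ (x : C) : cabs (x^*) = cabs x.
Proof. by have := normcJ x; rewrite !cabsE => -[]. Qed.
Lemma cabs_sqr (x : C) : ((cabs x) ^+ 2)%:C = x * x^*.
Proof. by rewrite rmorphXn /= -cabsE sqr_normc. Qed.
Lemma cabs0 : cabs (0 : C) = 0. Proof. exact: Normc.normc0. Qed.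
Lemma cabs_eq0 (x : C) : (cabs x == 0) = (x == 0).
Proof. apply/eqP/eqP => [/Normc.eq0_normc//|->]; exact: cabs0. Qed.
Lemma cabsR (r : R) : cabs r%:C = `|r|.
Proof. by rewrite /cabs /= expr0n /= addr0 sqrtr_sqr. Qed.
Lemma cabs_sum (I : finType) (P : pred I) (F : I -> C) :
  cabs (\sum_(i | P i) F i) <= \sum_(i | P i) cabs (F i).
Proof.
elim/big_ind2: _ => [|x1 x2 y1 y2 h1 h2|//]; first by rewrite cabs0.
by apply: (le_trans (cabsD _ _)); apply: lerD.
Qed.
Lemma cabs_sign k : cabs ((-1) ^+ k : C) = 1.
Proof.
elim: k => [|k IH]; first exact: Normc.normc1.
rewrite exprS cabsM IH mulr1 /cabs /= oppr0 expr0n /= addr0 sqrtr_sqr normrN normr1 //.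
Qed.

Lemma lagrange (I : finType) (a b : I -> R) :
  (\sum_i a i * b i) ^+ 2 <= (\sum_i a i ^+ 2) * (\sum_i b i ^+ 2).
Proof.
set A := \sum_i a i ^+ 2; set B := \sum_i b i ^+ 2; set S := \sum_i a i * b i.
have e1 : A * B = \sum_i \sum_j a i ^+ 2 * b j ^+ 2.
  by rewrite /A /B mulr_suml; apply: eq_bigr => i _; rewrite mulr_sumr.
have e2 : A * B = \sum_i \sum_j a j ^+ 2 * b i ^+ 2.
  rewrite mulrC /A /B mulr_suml; apply: eq_bigr => i _; rewrite mulr_sumr.
  by apply: eq_bigr => j _; rewrite mulrC.
have e3 : S ^+ 2 = \sum_i \sum_j (a i * b i) * (a j * b j).
  by rewrite expr2 /S mulr_suml; apply: eq_bigr => i _; rewrite mulr_sumr.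
have key : A * B + A * B - (S ^+ 2 + S ^+ 2) =
    \sum_i \sum_j (a i * b j - a j * b i) ^+ 2.
  rewrite {1}e1 e2 e3 -!big_split -sumrB /=; apply: eq_bigr => i _.
  rewrite -!big_split -sumrB /=; apply: eq_bigr => j _; ring.
have : 0 <= A * B + A * B - (S ^+ 2 + S ^+ 2).
  by rewrite key; apply: sumr_ge0 => i _; apply: sumr_ge0 => j _; apply: sqr_ge0.
lra.
Qed.

Lemma CS (I : finType) (a b : I -> R) :
  (forall i, 0 <= a i) -> (forall i, 0 <= b i) ->
  \sum_i a i * b i <= Num.sqrt (\sum_i a i ^+ 2) * Num.sqrt (\sum_i b i ^+ 2).
Proof.
move=> ha hb.
have hS : 0 <= \sum_i a i * b i by apply: sumr_ge0 => i _; apply: mulr_ge0.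
have hA : 0 <= \sum_i a i ^+ 2 by apply: sumr_ge0 => i _; apply: sqr_ge0.
rewrite -sqrtrM // -(ger0_norm hS) -sqrtr_sqr.
apply: ler_wsqrtr; exact: lagrange.
Qed.

Local Open Scope classical_set_scope.
Lemma sup_le_b (E : set R) (b : R) : (forall r, E r -> r <= b) -> 0 <= b -> sup E <= b.
Proof.
move=> hE hb; have [[r Er]|E0] := pselect (E !=set0).
  by apply: ge_sup; [exists r | move=> x /hE].
have -> : E = set0 by apply/seteqP; split=> x // Ex; exfalso; apply: E0; exists x.
by rewrite sup0.
Qed.
Lemma sup_ge0' (E : set R) : (forall r, E r -> 0 <= r) -> 0 <= sup E.
Proof.
move=> hE; have [hs|hs] := pselect (has_sup E); last by rewrite sup_out.
case: (hs) => -[r Er] _; apply: (le_trans (hE r Er)).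
exact: sup_upper_bound.
Qed.
Local Close Scope classical_set_scope.

Lemma vnorm2_ge0 n (v : 'cV[C]_n) : 0 <= vnorm2 v.
Proof. exact: sqrtr_ge0. Qed.
Lemma sum_cabs2_ge0 (I : finType) (F : I -> C) : 0 <= \sum_i cabs (F i) ^+ 2.
Proof. by apply: sumr_ge0 => i _; apply: sqr_ge0. Qed.
Lemma vnorm2_sqr n (v : 'cV[C]_n) : vnorm2 v ^+ 2 = \sum_i cabs (v i 0) ^+ 2.
Proof. by rewrite /vnorm2 sqr_sqrtr // sum_cabs2_ge0. Qed.
Lemma vnorm2_entry n (v : 'cV[C]_n) i : cabs (v i 0) <= vnorm2 v.
Proof.
rewrite -(ler_pXn2r (_ : 0 < 2)%N) ?nnegrE ?cabs_ge0 ?vnorm2_ge0 //.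
rewrite vnorm2_sqr (bigD1 i) //= lerDl; apply: sumr_ge0 => j _; apply: sqr_ge0.
Qed.
Lemma vnorm2_le_sum n (v : 'cV[C]_n) : vnorm2 v <= \sum_i cabs (v i 0).
Proof.
have h0 : 0 <= \sum_i cabs (v i 0) by apply: sumr_ge0 => i _; apply: cabs_ge0.
rewrite /vnorm2 -(ger0_norm h0) -sqrtr_sqr; apply: ler_wsqrtr.
rewrite expr2 mulr_suml; apply: ler_sum => i _; rewrite mulr_sumr (bigD1 i) //= expr2 lerDl.
by apply: sumr_ge0 => j _; apply: mulr_ge0; apply: cabs_ge0.
Qed.
Lemma vnorm2_scale n (a : C) (v : 'cV[C]_n) : vnorm2 (a *: v) = cabs a * vnorm2 v.
Proof.
rewrite /vnorm2 -(ger0_norm (cabs_ge0 a)) -sqrtr_sqr -sqrtrM ?sqr_ge0 //.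
congr Num.sqrt; rewrite mulr_sumr; apply: eq_bigr => i _.
by rewrite mxE cabsM exprMn.
Qed.
Lemma vnorm2_eq0 n (v : 'cV[C]_n) : vnorm2 v = 0 -> v = 0.
Proof.
move=> h; apply/matrixP => i j; rewrite (ord1 j) mxE; apply/eqP.
rewrite -cabs_eq0 eq_le cabs_ge0 andbT -h; exact: vnorm2_entry.
Qed.

Lemma spec_ge0 n (tau : 'M[C]_n) : 0 <= spec_norm tau.
Proof. by apply: sup_ge0' => r [v [_ ->]]; exact: vnorm2_ge0. Qed.

Lemma spec_bound n (tau : 'M[C]_n) (v : 'cV[C]_n) :
  vnorm2 (tau *m v) <= spec_norm tau * vnorm2 v.
Proof.
have ub : has_ubound [set r : R | exists v : 'cV[C]_n, vnorm2 v = 1 /\ r = vnorm2 (tau *m v)].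
  exists (\sum_i \sum_j cabs (tau i j)) => r [w [h1 ->]].
  change (vnorm2 (tau *m w) <= \sum_i \sum_j cabs (tau i j)).
  apply: (le_trans (vnorm2_le_sum (tau *m w))); apply: ler_sum => i _.
  rewrite mxE; apply: (le_trans (cabs_sum _ _)); apply: ler_sum => j _.
  rewrite cabsM -[X in _ <= X]mulr1; apply: ler_wpM2l; first exact: cabs_ge0.
  by rewrite -h1; exact: vnorm2_entry.
have [h0|hn] := eqVneq (vnorm2 v) 0.
  rewrite h0 mulr0 (vnorm2_eq0 h0) mulmx0.
  by have := vnorm2_scale 0 v; rewrite scale0r cabs0 mul0r => ->.
have hp : 0 < vnorm2 v by rewrite lt_def hn vnorm2_ge0.
set c := (vnorm2 v)^-1.
have hw : vnorm2 (c%:C *: v) = 1.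
  by rewrite vnorm2_scale cabsR ger0_norm ?invr_ge0 ?vnorm2_ge0 // mulVf.
have := ub_le_sup ub (ex_intro _ (c%:C *: v) (conj hw erefl)).
rewrite -scalemxAr vnorm2_scale cabsR ger0_norm ?invr_ge0 ?vnorm2_ge0 //.
by rewrite mulrC ler_pdivrMr.
Qed.

Definition setb n (e : config n) (j : 'I_n) (b : bool) : config n :=
  [ffun k => if k == j then b else e k].
Lemma setbE n (e : config n) j b k : setb e j b k = if k == j then b else e k.
Proof. by rewrite ffunE. Qed.
Lemma setbK n (c : config n) j : c j -> setb (setb c j false) j true = c.
Proof. by move=> hc; apply/ffunP => k; rewrite !setbE; case: eqP => [->|]. Qed.
Lemma uniq_pre n (j : 'I_n) (c e : config n) :
  (~~ e j && (c == setb e j true)) = (c j && (e == setb c j false)).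
Proof.
apply/andP/andP => [[hej /eqP ->]|[hcj /eqP ->]]; split.
- by rewrite setbE eqxx.
- apply/eqP/ffunP => k; rewrite !setbE; case: eqP => [->|//].
  by rewrite (negbTE hej).
- by rewrite setbE eqxx.
- by rewrite setbK.
Qed.
Lemma Adag_E n (j : 'I_n) (c d : config n) :
  (Adag j c d : C) = if ~~ d j && (c == setb d j true) then (-1) ^+ nbefore d j else 0.
Proof.
rewrite /Adag; congr (if _ then _ else _).
apply/and3P/andP => [[hc hd /forallP hk]|[hd /eqP ->]].
  split=> //; apply/eqP/ffunP => k; rewrite setbE; case: eqP => [->//|/eqP kj].
  by have := hk k; rewrite kj /= => /eqP.
split=> //; first by rewrite setbE eqxx.
by apply/forallP => k; apply/implyP => kj; rewrite setbE (negbTE kj).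
Qed.
Lemma conj_sign k : (((-1) ^+ k : C)^*)%C = (-1) ^+ k.
Proof. by rewrite rmorphXn rmorphN1. Qed.

Lemma conjE (x : C) : Num.conj x = conjc x. Proof. by []. Qed.
Lemma cjM (x y : C) : conjc (x * y) = conjc x * conjc y.
Proof. exact: (conjc_is_multiplicative R).1. Qed.
Lemma cjD (x y : C) : conjc (x + y) = conjc x + conjc y.
Proof. case: x => a b; case: y => c d; rewrite /conjc /=; congr Complex; rewrite opprD //. Qed.
Lemma cj0 : conjc (0 : C) = 0. Proof. exact: conjc0. Qed.
Lemma cjS (I : finType) (F : I -> C) : conjc (\sum_i F i) = \sum_i conjc (F i).
Proof. exact: (big_morph conjc cjD cj0). Qed.
Lemma Aop_apply n (j : 'I_n) (phi : fvec R n) e :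
  apply_op (Aop j) phi e = if e j then 0 else (-1) ^+ nbefore e j * phi (setb e j true).
Proof.
rewrite /apply_op /Aop /adj_op.
under eq_bigr => d _ do rewrite Adag_E.
case: (boolP (e j)) => hej.
  by rewrite big1 // => d _; rewrite andFb conjc0 mul0r.
under eq_bigr => d _ do rewrite andTb.
rewrite (bigD1 (setb e j true)) //= eqxx big1 ?addr0 ?conj_sign //.
by move=> d /negbTE ->; rewrite conjc0 mul0r.
Qed.
Lemma Adag_apply n (j : 'I_n) (chi : fvec R n) c :
  apply_op (Adag j) chi c =
  if c j then (-1) ^+ nbefore (setb c j false) j * chi (setb c j false) else 0.
Proof.
rewrite /apply_op.
under eq_bigr => d _ do rewrite Adag_E uniq_pre.
case: (boolP (c j)) => hc /=; last by rewrite big1 // => d _; rewrite mul0r.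
rewrite (bigD1 (setb c j false)) //= eqxx big1 ?addr0 //.
by move=> d /negbTE ->; rewrite mul0r.
Qed.
Lemma comp_apply n (X Y : fop R n) psi c :
  apply_op (comp_op X Y) psi c = apply_op X (apply_op Y psi) c.
Proof.
rewrite /apply_op /comp_op.
under eq_bigr do rewrite mulr_suml.
rewrite exchange_big; apply: eq_bigr => e _; rewrite mulr_sumr.
by apply: eq_bigr => d _; rewrite mulrA.
Qed.
Lemma Nop_apply n (m : 'I_n) (chi : fvec R n) c :
  apply_op (Nop m) chi c = if c m then chi c else 0.
Proof.
rewrite /Nop comp_apply Adag_apply; case: ifP => hc //.
by rewrite Aop_apply setbE eqxx /= signrMK setbK.
Qed.
Lemma inner_adj n (X : fop R n) phi chi :
  inner phi (apply_op X chi) = inner (apply_op (adj_op X) phi) chi.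
Proof.
rewrite /inner /apply_op /adj_op.
under eq_bigr do rewrite conjE.
under [RHS]eq_bigr => d _ do rewrite conjE cjS mulr_suml.
rewrite [RHS]exchange_big; apply: eq_bigr => c _; rewrite mulr_sumr.
by apply: eq_bigr => d _; rewrite cjM conjcK; ring.
Qed.
Lemma inner_sum_op n (I : finType) (F : I -> fop R n) phi psi :
  inner phi (apply_op (sum_op F) psi) = \sum_i inner phi (apply_op (F i) psi).
Proof.
rewrite /inner /apply_op /sum_op.
under eq_bigr => c _ do under eq_bigr => d _ do rewrite mulr_suml.
under eq_bigr => c _ do rewrite exchange_big mulr_sumr.
by rewrite [LHS]exchange_big.
Qed.
Lemma inner_scale_op n a (X : fop R n) phi psi :
  inner phi (apply_op (scale_op a X) psi) = a * inner phi (apply_op X psi).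
Proof.
rewrite /inner /apply_op /scale_op mulr_sumr; apply: eq_bigr => c _.
rewrite mulrCA; congr (_ * _); rewrite mulr_sumr.
by apply: eq_bigr => d _; rewrite mulrA.
Qed.
Lemma inner_comp n (X Y : fop R n) phi psi :
  inner phi (apply_op (comp_op X Y) psi) = inner phi (apply_op X (apply_op Y psi)).
Proof. by apply: eq_bigr => c _; rewrite comp_apply. Qed.

Lemma nelecE n (c : config n) : nelec c = #|[set j : 'I_n | c j]%SET|.
Proof.
rewrite /nelec; apply: eq_card => j.
by rewrite [in RHS]inE /in_mem /= /in_set asboolb.
Qed.
Lemma nelec_setb n (e : config n) j : ~~ e j -> nelec (setb e j true) = (nelec e).+1.
Proof.
move=> hj; rewrite !nelecE.
have h : [set k | setb e j true k] = j |: [set k | e k].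
  by apply/setP => k; rewrite !inE setbE; case: eqP.
rewrite h.
by rewrite cardsU1 inE hj.
Qed.
Lemma cabs_sign' k : cabs ((-1) ^+ k : C) = 1. Proof. exact: cabs_sign. Qed.

Lemma norm1 n eta (phi : fvec R n) : eta_state eta phi -> \sum_c cabs (phi c) ^+ 2 = 1.
Proof.
move=> [_ h]; apply: (@complexI R); rewrite rmorph_sum /=.
rewrite -[RHS]h; apply: eq_bigr => c _; rewrite cabs_sqr mulrC conjE //.
Qed.

Lemma Aop_cabs2 n (j : 'I_n) (phi : fvec R n) e :
  cabs (apply_op (Aop j) phi e) ^+ 2 =
  \sum_c (if ~~ e j && (c == setb e j true) then cabs (phi c) ^+ 2 else 0).
Proof.
rewrite Aop_apply; case: (boolP (e j)) => hej.
  by rewrite cabs0 expr0n big1 // => c _; rewrite andFb.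
under eq_bigr => c _ do rewrite andTb.
by rewrite -big_mkcond big_pred1_eq cabsM cabs_sign mul1r.
Qed.

Lemma Aop_norm2 n (j : 'I_n) (phi : fvec R n) :
  \sum_e cabs (apply_op (Aop j) phi e) ^+ 2 = \sum_(c : config n) (c j)%:R * cabs (phi c) ^+ 2.
Proof.
under eq_bigr => e _ do rewrite Aop_cabs2.
rewrite exchange_big; apply: eq_bigr => c _.
under eq_bigr => e _ do rewrite uniq_pre.
case: (c j); last by rewrite mul0r big1.
under eq_bigr => e _ do rewrite andTb.
by rewrite -big_mkcond big_pred1_eq mul1r.
Qed.

Lemma sum_nelec n (c : config n) : \sum_j ((c j)%:R : R) = (nelec c)%:R.
Proof.
rewrite (eq_bigr (fun j => if c j then 1 else 0)); last by move=> j _; case: (c j).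
rewrite -big_mkcond /= nelecE.
rewrite (eq_bigl (fun j => j \in [set k : 'I_n | c k]%SET)); last by move=> j; rewrite inE.
by rewrite sumr_const.
Qed.

Lemma sumN n eta (phi : fvec R n) : eta_state eta phi ->
  \sum_j \sum_e cabs (apply_op (Aop j) phi e) ^+ 2 = eta%:R.
Proof.
move=> hs; under eq_bigr => j _ do rewrite Aop_norm2.
rewrite exchange_big /=.
under eq_bigr => c _ do rewrite -mulr_suml sum_nelec.
rewrite -[RHS]mulr1 -(norm1 hs) mulr_sumr; apply: eq_bigr => c _.
have [->|he] := eqVneq (nelec c) eta => //.
by rewrite (hs.1 c he) cabs0 expr0n !mulr0.
Qed.

Lemma Aop_support n eta (phi : fvec R n) j e : eta_state eta phi ->
  apply_op (Aop j) phi e != 0 -> (nelec e < eta)%N.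
Proof.
move=> hs; rewrite Aop_apply; case: (boolP (e j)) => hej; first by rewrite eqxx.
rewrite mulf_eq0 negb_or => /andP[_ hp].
have [he|he] := eqVneq (nelec (setb e j true)) eta.
  by rewrite -he nelec_setb.
by rewrite (hs.1 _ he) eqxx in hp.
Qed.

Lemma cabs_inner (I : finType) (x y : I -> C) :
  cabs (\sum_i conjc (x i) * y i) <=
  Num.sqrt (\sum_i cabs (x i) ^+ 2) * Num.sqrt (\sum_i cabs (y i) ^+ 2).
Proof.
apply: le_trans (cabs_sum _ _) _.
under eq_bigr => i _ do rewrite cabsM cabsJ.
by apply: CS => i; apply: cabs_ge0.
Qed.

Lemma sq_bound n eta (phi : fvec R n) (p : 'I_n -> config n -> C) (P : R) :
  eta_state eta phi -> 0 <= P ->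
  (forall j e, (nelec e < eta)%N -> cabs (p j e) <= P) ->
  \sum_e \sum_j cabs (p j e * apply_op (Aop j) phi e) ^+ 2 <= P ^+ 2 * eta%:R.
Proof.
move=> hs hP hp; rewrite -(sumN hs) mulr_sumr exchange_big /=.
apply: ler_sum => j _; rewrite mulr_sumr; apply: ler_sum => e _.
rewrite cabsM exprMn.
have [->|hn] := eqVneq (apply_op (Aop j) phi e) 0.
  by rewrite cabs0 expr0n /= !mulr0.
apply: ler_wpM2r; first exact: sqr_ge0.
rewrite expr2 [P ^+ 2]expr2; have := hp j e (Aop_support hs hn) => h.
by apply: ler_pM => //; apply: cabs_ge0.
Qed.

Lemma sqrt_bound (X P : R) (eta : nat) : 0 <= P -> X <= P ^+ 2 * eta%:R ->
  Num.sqrt X <= P * Num.sqrt eta%:R.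
Proof.
move=> hP hX; rewrite -(ger0_norm hP) -sqrtr_sqr -sqrtrM ?sqr_ge0 //.
exact: ler_wsqrtr.
Qed.

Lemma core n (tau : 'M[C]_n) eta (phi psi : fvec R n)
    (p q : 'I_n -> config n -> C) (P Q : R) :
  eta_state eta phi -> eta_state eta psi -> 0 <= P -> 0 <= Q ->
  (forall j e, (nelec e < eta)%N -> cabs (p j e) <= P) ->
  (forall k e, (nelec e < eta)%N -> cabs (q k e) <= Q) ->
  cabs (\sum_j \sum_k tau j k * \sum_e Num.conj (apply_op (Aop j) phi e) *
           (p j e * (q k e * apply_op (Aop k) psi e)))
   <= spec_norm tau * (P * Q * eta%:R).
Proof.
move=> hphi hpsi hP hQ hp hq.
pose u j e := conjc (p j e) * apply_op (Aop j) phi e.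
pose v k e := q k e * apply_op (Aop k) psi e.
pose V e : 'cV[C]_n := \col_k v k e.
pose U e : 'cV[C]_n := \col_j u j e.
have eq1 : \sum_j \sum_k tau j k * \sum_e Num.conj (apply_op (Aop j) phi e) *
           (p j e * (q k e * apply_op (Aop k) psi e)) =
   \sum_e \sum_j conjc (u j e) * ((tau *m V e) j 0).
  under eq_bigr => j _ do under eq_bigr => k _ do rewrite mulr_sumr.
  under eq_bigr => j _ do rewrite exchange_big.
  rewrite exchange_big; apply: eq_bigr => e _; apply: eq_bigr => j _.
  rewrite mxE mulr_sumr; apply: eq_bigr => k _.
  by rewrite mxE /u /v cjM conjcK conjE; ring.
rewrite eq1.
have hU : forall e, vnorm2 (U e) = Num.sqrt (\sum_j cabs (u j e) ^+ 2).
  by move=> e; rewrite /vnorm2; congr Num.sqrt; apply: eq_bigr => j _; rewrite mxE.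
have hV : forall e, vnorm2 (V e) ^+ 2 = \sum_j cabs (v j e) ^+ 2.
  by move=> e; rewrite vnorm2_sqr; apply: eq_bigr => j _; rewrite mxE.
have hU2 : forall e, vnorm2 (U e) ^+ 2 = \sum_j cabs (u j e) ^+ 2.
  by move=> e; rewrite vnorm2_sqr; apply: eq_bigr => j _; rewrite mxE.
apply: le_trans (cabs_sum _ _) _.
apply: le_trans (_ : \sum_e vnorm2 (U e) * (spec_norm tau * vnorm2 (V e)) <= _).
  apply: ler_sum => e _; apply: le_trans (cabs_inner _ _) _.
  rewrite -hU; apply: ler_wpM2l; first exact: vnorm2_ge0.
  exact: spec_bound.
under eq_bigr => e _ do rewrite mulrCA.
rewrite -mulr_sumr; apply: ler_wpM2l; first exact: spec_ge0.
apply: (le_trans (CS (fun e => vnorm2_ge0 (U e)) (fun e => vnorm2_ge0 (V e)))).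
have hsq : Num.sqrt (eta%:R : R) * Num.sqrt eta%:R = eta%:R.
  by rewrite -expr2 sqr_sqrtr // ler0n.
rewrite -[X in _ <= X * _]mulr1 -[X in _ <= _ * X]hsq.
rewrite mulr1 mulrACA.
apply: ler_pM; try exact: sqrtr_ge0.
- apply: sqrt_bound => //.
  under eq_bigr => e _ do rewrite hU2.
  apply: (@sq_bound n eta phi (fun j e => conjc (p j e)) P hphi hP).
  by move=> j e he; rewrite cabsJ; apply: hp.
- apply: sqrt_bound => //.
  under eq_bigr => e _ do rewrite hV.
  exact: (@sq_bound n eta psi q Q hpsi hQ hq).
Qed.

Lemma final_bound n (tau : 'M[C]_n) eta (X : fop R n)
    (p q : 'I_n -> config n -> C) (P Q : R) :
  0 <= P -> 0 <= Q ->
  (forall j e, (nelec e < eta)%N -> cabs (p j e) <= P) ->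
  (forall k e, (nelec e < eta)%N -> cabs (q k e) <= Q) ->
  (forall phi psi : fvec R n, inner phi (apply_op X psi) =
     \sum_j \sum_k tau j k * \sum_e Num.conj (apply_op (Aop j) phi e) *
           (p j e * (q k e * apply_op (Aop k) psi e))) ->
  eta_norm X eta <= spec_norm tau * (P * Q * eta%:R).
Proof.
move=> hP hQ hp hq hX; apply: sup_le_b.
  move=> r [phi [psi [h1 h2 ->]]]; rewrite hX; exact: core.
by apply: mulr_ge0; [exact: spec_ge0 | apply: mulr_ge0; [exact: mulr_ge0|exact: ler0n]].
Qed.

Lemma bigmax_ge n (F : 'I_n -> R) i : F i <= \big[Num.max/0]_(l < n) F l.
Proof. by rewrite (bigD1 i) //= le_max lexx. Qed.
Lemma bigmax_ge0 n (F : 'I_n -> R) : 0 <= \big[Num.max/0]_(l < n) F l.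
Proof. by elim/big_rec: _ => // i x _ hx; rewrite le_max hx orbT. Qed.
Lemma max_norm_ge0 n (nu : 'M[C]_n) : 0 <= max_norm nu.
Proof. exact: bigmax_ge0. Qed.
Lemma max_norm_ge n (nu : 'M[C]_n) l m : cabs (nu l m) <= max_norm nu.
Proof. by apply: le_trans (bigmax_ge _ m) (bigmax_ge _ l). Qed.

Lemma cabs1 : cabs (1 : C) = 1. Proof. exact: Normc.normc1. Qed.

Lemma wsum_bound n (nu : 'M[C]_n) (w : 'I_n -> C) (e : config n) (eta : nat) :
  (forall m, cabs (w m) <= max_norm nu) -> (nelec e < eta)%N ->
  cabs (\sum_m w m * (if e m then 1 else 0)) <= max_norm nu * eta%:R.
Proof.
move=> hw he; apply: le_trans (cabs_sum _ _) _.
apply: le_trans (_ : \sum_m max_norm nu * (e m)%:R <= _).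
  apply: ler_sum => m _; rewrite cabsM; case: (e m).
    by rewrite cabs1 !mulr1.
  by rewrite cabs0 !mulr0.
rewrite -mulr_sumr sum_nelec; apply: ler_wpM2l; first exact: max_norm_ge0.
by rewrite ler_nat ltnW.
Qed.

Lemma term1 n (j k m : 'I_n) (phi psi : fvec R n) :
  inner phi (apply_op (comp_op (Adag j) (comp_op (Nop m) (Aop k))) psi) =
  \sum_e Num.conj (apply_op (Aop j) phi e) *
     ((if e m then 1 else 0) * apply_op (Aop k) psi e).
Proof.
rewrite inner_comp inner_adj; apply: eq_bigr => e _.
by rewrite comp_apply Nop_apply; case: (e m); rewrite ?mul1r ?mul0r.
Qed.
Lemma term2 n (j k : 'I_n) (phi psi : fvec R n) :
  inner phi (apply_op (comp_op (Adag j) (Aop k)) psi) =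
  \sum_e Num.conj (apply_op (Aop j) phi e) * apply_op (Aop k) psi e.
Proof. by rewrite inner_comp inner_adj. Qed.

Lemma sum3 n (G : 'I_n -> 'I_n -> 'I_n -> C) :
  \sum_(p : 'I_n * 'I_n * 'I_n) (let: (j, k, m) := p in G j k m) =
  \sum_j \sum_k \sum_m G j k m.
Proof.
by rewrite pair_bigA pair_bigA; apply: eq_bigr => -[[j k] m] _.
Qed.
Lemma sum2 n (G : 'I_n -> 'I_n -> C) :
  \sum_(p : 'I_n * 'I_n) (let: (j, k) := p in G j k) = \sum_j \sum_k G j k.
Proof. by rewrite pair_bigA; apply: eq_bigr => -[j k] _. Qed.

End S.

Unset Implicit Arguments.
Theorem proposition8 (R : realType) (n : nat) (tau nu : 'M[R[i]]_n)
    (eta : nat) (heta : (eta <= n)%N) :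
  let B := spec_norm tau * max_norm nu in
  (* 1 *)
      eta_norm (sum_op (fun jkm : 'I_n * 'I_n * 'I_n =>
          let: (j, k, m) := jkm in
          scale_op (tau j k * nu k m)
            (comp_op (Adag j) (comp_op (Nop m) (Aop k))))) eta
        <= B * (eta ^ 2)%:R /\
      (* 2 *)
      eta_norm (sum_op (fun jk : 'I_n * 'I_n =>
          let: (j, k) := jk in
          scale_op (tau j k * nu k k) (comp_op (Adag j) (Aop k)))) eta
        <= B * eta%:R /\
      (* 3 *)
      eta_norm (sum_op (fun jkl : 'I_n * 'I_n * 'I_n =>
          let: (j, k, l) := jkl in
          scale_op (tau j k * nu l k)
            (comp_op (Adag j) (comp_op (Nop l) (Aop k))))) eta
        <= B * (eta ^ 2)%:R /\
      (* 4 *)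
      eta_norm (sum_op (fun jkm : 'I_n * 'I_n * 'I_n =>
          let: (j, k, m) := jkm in
          scale_op (tau j k * nu j m)
            (comp_op (Adag j) (comp_op (Nop m) (Aop k))))) eta
        <= B * (eta ^ 2)%:R /\
      (* 5 *)
      eta_norm (sum_op (fun jk : 'I_n * 'I_n =>
          let: (j, k) := jk in
          scale_op (tau j k * nu j j) (comp_op (Adag j) (Aop k)))) eta
        <= B * eta%:R /\
      (* 6 *)
      eta_norm (sum_op (fun jkl : 'I_n * 'I_n * 'I_n =>
          let: (j, k, l) := jkl in
          scale_op (tau j k * nu l j)
            (comp_op (Adag j) (comp_op (Nop l) (Aop k))))) eta
        <= B * (eta ^ 2)%:R.
Proof.
move=> B.
have hM := max_norm_ge0 nu.
have hS := spec_ge0 tau.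
have hmax : forall l m, cabs (nu l m) <= max_norm nu by move=> l m; exact: max_norm_ge.
have e2 : spec_norm tau * (1 * (max_norm nu * eta%:R) * eta%:R) = B * (eta ^ 2)%:R.
  by rewrite /B natrX; ring.
have e2' : spec_norm tau * (max_norm nu * eta%:R * 1 * eta%:R) = B * (eta ^ 2)%:R.
  by rewrite /B natrX; ring.
have e1 : spec_norm tau * (1 * max_norm nu * eta%:R) = B * eta%:R.
  by rewrite /B; ring.
have e1' : spec_norm tau * (max_norm nu * 1 * eta%:R) = B * eta%:R.
  by rewrite /B; ring.
have hMe : 0 <= max_norm nu * eta%:R by apply: mulr_ge0 => //; exact: ler0n.
split; [|split; [|split; [|split; [|split]]]].
- rewrite -e2; apply: (final_bound (p := fun _ _ => 1)
    (q := fun k e => \sum_m nu k m * (if e m then 1 else 0))) => //.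
  + by move=> j e _; rewrite cabs1.
  + by move=> k e he; apply: wsum_bound.
  + move=> phi psi; rewrite inner_sum_op.
    rewrite (eq_bigr (fun p => let: (j, k, m) := p in tau j k * nu k m *
      \sum_e Num.conj (apply_op (Aop j) phi e) *
      ((if e m then 1 else 0) * apply_op (Aop k) psi e))); last first.
      by move=> [[j k] m] _; rewrite inner_scale_op term1.
    rewrite sum3; apply: eq_bigr => j _; apply: eq_bigr => k _.
    under eq_bigr => m _ do rewrite mulr_sumr.
    rewrite exchange_big [RHS]mulr_sumr; apply: eq_bigr => e _.
    rewrite mul1r mulr_suml mulr_sumr mulr_sumr; apply: eq_bigr => m _.
    by rewrite -mulrA; congr (_ * _); rewrite mulrCA -[in RHS]mulrA.
- rewrite -e1; apply: (final_bound (p := fun _ _ => 1)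
    (q := fun k e => nu k k)) => //.
  + by move=> j e _; rewrite cabs1.
  + move=> phi psi; rewrite inner_sum_op.
    rewrite (eq_bigr (fun p => let: (j, k) := p in tau j k * nu k k *
      \sum_e Num.conj (apply_op (Aop j) phi e) * apply_op (Aop k) psi e)); last first.
      by move=> [j k] _; rewrite inner_scale_op term2.
    rewrite sum2; apply: eq_bigr => j _; apply: eq_bigr => k _.
    rewrite !mulr_sumr; apply: eq_bigr => e _; ring.
- rewrite -e2; apply: (final_bound (p := fun _ _ => 1)
    (q := fun k e => \sum_l nu l k * (if e l then 1 else 0))) => //.
  + by move=> j e _; rewrite cabs1.
  + by move=> k e he; apply: wsum_bound.
  + move=> phi psi; rewrite inner_sum_op.
    rewrite (eq_bigr (fun p => let: (j, k, l) := p in tau j k * nu l k *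
      \sum_e Num.conj (apply_op (Aop j) phi e) *
      ((if e l then 1 else 0) * apply_op (Aop k) psi e))); last first.
      by move=> [[j k] l] _; rewrite inner_scale_op term1.
    rewrite sum3; apply: eq_bigr => j _; apply: eq_bigr => k _.
    under eq_bigr => m _ do rewrite mulr_sumr.
    rewrite exchange_big [RHS]mulr_sumr; apply: eq_bigr => e _.
    rewrite mul1r mulr_suml mulr_sumr mulr_sumr; apply: eq_bigr => m _.
    by rewrite -mulrA; congr (_ * _); rewrite mulrCA -[in RHS]mulrA.
- rewrite -e2'; apply: (final_bound (q := fun _ _ => 1)
    (p := fun j e => \sum_m nu j m * (if e m then 1 else 0))) => //.
  + by move=> j e he; apply: wsum_bound.
  + by move=> k e _; rewrite cabs1.
  + move=> phi psi; rewrite inner_sum_op.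
    rewrite (eq_bigr (fun p => let: (j, k, m) := p in tau j k * nu j m *
      \sum_e Num.conj (apply_op (Aop j) phi e) *
      ((if e m then 1 else 0) * apply_op (Aop k) psi e))); last first.
      by move=> [[j k] m] _; rewrite inner_scale_op term1.
    rewrite sum3; apply: eq_bigr => j _; apply: eq_bigr => k _.
    under eq_bigr => m _ do rewrite mulr_sumr.
    rewrite exchange_big [RHS]mulr_sumr; apply: eq_bigr => e _.
    rewrite mul1r mulr_suml mulr_sumr mulr_sumr; apply: eq_bigr => m _.
    by rewrite -mulrA; congr (_ * _); rewrite mulrCA -[in RHS]mulrA.
- rewrite -e1'; apply: (final_bound (q := fun _ _ => 1)
    (p := fun j e => nu j j)) => //.
  + by move=> k e _; rewrite cabs1.
  + move=> phi psi; rewrite inner_sum_op.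
    rewrite (eq_bigr (fun p => let: (j, k) := p in tau j k * nu j j *
      \sum_e Num.conj (apply_op (Aop j) phi e) * apply_op (Aop k) psi e)); last first.
      by move=> [j k] _; rewrite inner_scale_op term2.
    rewrite sum2; apply: eq_bigr => j _; apply: eq_bigr => k _.
    rewrite !mulr_sumr; apply: eq_bigr => e _; ring.
- rewrite -e2'; apply: (final_bound (q := fun _ _ => 1)
    (p := fun j e => \sum_l nu l j * (if e l then 1 else 0))) => //.
  + by move=> j e he; apply: wsum_bound.
  + by move=> k e _; rewrite cabs1.
  + move=> phi psi; rewrite inner_sum_op.
    rewrite (eq_bigr (fun p => let: (j, k, l) := p in tau j k * nu l j *
      \sum_e Num.conj (apply_op (Aop j) phi e) *
      ((if e l then 1 else 0) * apply_op (Aop k) psi e))); last first.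
      by move=> [[j k] l] _; rewrite inner_scale_op term1.
    rewrite sum3; apply: eq_bigr => j _; apply: eq_bigr => k _.
    under eq_bigr => m _ do rewrite mulr_sumr.
    rewrite exchange_big [RHS]mulr_sumr; apply: eq_bigr => e _.
    rewrite mul1r mulr_suml mulr_sumr mulr_sumr; apply: eq_bigr => m _.
    by rewrite -mulrA; congr (_ * _); rewrite mulrCA -[in RHS]mulrA.
Qed.
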